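(* Fix $i\in[n]$ and $\mathbf{x}_{-i}\in\mathcal{C}_{-i}$, let $A=A(\mathbf{x}_{-i})$, $\mathcal{R}_A=\prod_{j\in A}(0,\omega_{ij}-\mathbf{x}_T^{j|i})$ and $\mathcal{V}_{\mathbf{x}_{-i}}((x_{ij})_{j\in A})=\sum_{j\in A}x_{ij}^{a_i}\mathcal{F}_{ij}(x_{ij}+\mathbf{x}_T^{j|i})$. Then the system of equations $\psi_{ij}(x_{ij};\mathbf{x}_T^{j|i})=0$, $j\in A$, has a unique solution in $\mathcal{R}_A$, and this solution is a global maximum of $\mathcal{V}_{\mathbf{x}_{-i}}$ on $\mathcal{R}_A$.
   Context: Fragile multi-CPR Game: $n,m\ge1$, $[k]=\{1,\dots,k\}$, $C_m=\{(x_1,\dots,x_m)\in[0,1]^m:\sum_j x_j\le1\}$, $\mathcal{C}_{-i}=\prod_{[n]\setminus\{i\}}C_m$; for $\mathbf{x}_{-i}=(\mathbf{x}_\ell)_{\ell\ne i}$ with $\mathbf{x}_\ell=(x_{\ell1},\dots,x_{\ell m})$ put $\mathbf{x}_T^{j|i}=\sum_{\ell\ne i}x_{\ell j}$. Each CPR $j$ has a return rate $\mathcal{R}_j(t)>1$ and failure probability $p_j(t)\in[0,1]$; each player $i$ has parameters $a_i,k_i$. Effective rate: $\mathcal{F}_{ij}(t)=(\mathcal{R}_j(t)-1)^{a_i}(1-p_j(t))-k_ip_j(t)$. Assumption: (1) $p_j(0)=0$, $p_j(t)=1$ for $t\ge1$; (2) $a_i\in(0,1]$, $k_i>0$; (3)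 each $\mathcal{F}_{ij}$ (continuous on $[0,1]$) has strictly negative first and second derivatives on $(0,1)$. Let $\omega_{ij}\in(0,1)$ be the unique zero of $\mathcal{F}_{ij}$ in $(0,1)$. Active CPRs: $A(\mathbf{x}_{-i})=\{j:\mathbf{x}_T^{j|i}<\omega_{ij}\}$. Define $\psi_{ij}(x;s)=x\,\mathcal{F}_{ij}'(x+s)+a_i\mathcal{F}_{ij}(x+s)$. *)

(* Defs.v *)
From mathcomp Require Import all_boot all_order all_algebra.
From mathcomp Require Import all_classical all_reals all_analysis.
Set Implicit Arguments. Unset Strict Implicit. Unset Printing Implicit Defensive.
Import Order.TTheory GRing.Theory Num.Theory numFieldNormedType.Exports.
Local Open Scope ring_scope.

Definition Feff {R : realType} (Rr p : R -> R) (a k : R) (t : R) : R :=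
  (Rr t - 1) `^ a * (1 - p t) - k * p t.

Definition psi {R : realType} (F : R -> R) (a x s : R) : R :=
  x * derive1 F (x + s) + a * F (x + s).

Definition xT {R : realType} (n m : nat) (x : 'I_n -> 'I_m -> R)
  (i : 'I_n) (j : 'I_m) : R := \sum_(l < n | l != i) x l j.

Definition inC {R : realType} (m : nat) (y : 'I_m -> R) : Prop :=
  (forall j, 0 <= y j <= 1) /\ \sum_(j < m) y j <= 1.

(* Main.v *)
Require Import Defs.
From mathcomp Require Import all_boot all_order all_algebra.
From mathcomp Require Import all_classical all_reals all_analysis.
From mathcomp Require Import ring lra.
Import Order.TTheory GRing.Theory Num.Theory numFieldNormedType.Exports.
Local Open Scope classical_set_scope.
Local Open Scope ring_scope.

Section Gen.
Variable R : realType.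

Lemma mvt01 (G : R -> R) (dG : forall t, 0 < t < 1 -> derivable G t 1) u v :
  0 < u -> u < v -> v < 1 ->
  exists2 c, u < c < v & G v - G u = derive1 G c * (v - u).
Proof.
move=> u0 uv v1.
have dG' : {in `[u, v], forall x, derivable G x 1}.
  by move=> x; rewrite in_itv /= => /andP[ux xv]; apply: dG; apply/andP; split; lra.
have hd : forall x, x \in `]u, v[ -> is_derive x 1 G (derive1 G x).
  move=> x; rewrite in_itv /= => /andP[ux xv].
  rewrite derive1E; apply: derivableP; apply: dG.
  by apply/andP; split; lra.
have [c] := MVT uv hd (derivable_within_continuous dG').
by rewrite in_itv /= => ucv h; exists c.
Qed.

Variable F : R -> R.
Hypothesis d1 : forall t, 0 < t < 1 -> derivable F t 1 /\ derive1 F t < 0.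
Hypothesis d2 : forall t, 0 < t < 1 -> derivable (derive1 F) t 1 /\ derive1 (derive1 F) t < 0.

Lemma Fdec u v : 0 < u -> u < v -> v < 1 -> F v < F u.
Proof.
move=> u0 uv v1.
have [c /andP[uc cv] h] := @mvt01 F (fun t ht => (d1 _ ht).1) _ _ u0 uv v1.
have : derive1 F c < 0 by apply: (proj2 (d1 c _)); apply/andP; split; lra.
move=> hc; have : derive1 F c * (v - u) < 0 by rewrite pmulr_llt0 ?subr_gt0.
lra.
Qed.

Lemma F'dec u v : 0 < u -> u < v -> v < 1 -> derive1 F v < derive1 F u.
Proof.
move=> u0 uv v1.
have [c /andP[uc cv] h] := @mvt01 (derive1 F) (fun t ht => (d2 _ ht).1) _ _ u0 uv v1.
have : derive1 (derive1 F) c < 0 by apply: (proj2 (d2 c _)); apply/andP; split; lra.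
move=> hc; have : derive1 (derive1 F) c * (v - u) < 0 by rewrite pmulr_llt0 ?subr_gt0.
lra.
Qed.

Lemma tangent u v : 0 < u < 1 -> 0 < v < 1 -> F u <= F v + derive1 F v * (u - v).
Proof.
move=> /andP[u0 u1] /andP[v0 v1].
have [uv|vu|->] := ltgtP u v.
- have [c /andP[uc cv] h] := @mvt01 F (fun t ht => (d1 _ ht).1) _ _ u0 uv v1.
  have : derive1 F v < derive1 F c by apply: F'dec; lra.
  move=> hc; have : derive1 F c * (v - u) >= derive1 F v * (v - u).
    by rewrite ler_pM2r ?subr_gt0 // ltW.
  lra.
- have [c /andP[uc cv] h] := @mvt01 F (fun t ht => (d1 _ ht).1) _ _ v0 vu u1.
  have : derive1 F c < derive1 F v by apply: F'dec; lra.
  move=> hc; have : derive1 F c * (u - v) <= derive1 F v * (u - v).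
    by rewrite ler_pM2r ?subr_gt0 // ltW.
  lra.
- lra.
Qed.

Lemma F'cont t : 0 < t < 1 -> {for t, continuous (derive1 F)}.
Proof.
move=> ht; apply/differentiable_continuous; rewrite -derivable1_diffP.
exact: (d2 _ ht).1.
Qed.

Lemma Fcont t : 0 < t < 1 -> {for t, continuous F}.
Proof.
move=> ht; apply/differentiable_continuous; rewrite -derivable1_diffP.
exact: (d1 _ ht).1.
Qed.


Lemma bern (a t : R) : 0 < a <= 1 -> 0 < t -> t `^ a <= 1 + a * (t - 1).
Proof.
move=> /andP[a0 a1] t0.
have [->|alt1] := eqVneq a 1; first by rewrite powRr1; [lra | exact: ltW].
have a1' : a < 1 by rewrite lt_neqAle alt1 a1.
have := @conjugate_powR R (t `^ a) 1 a^-1 (1 - a)^-1 (powR_ge0 _ _) ler01.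
rewrite invr_gt0 a0 invr_gt0 subr_gt0 a1' !invrK => /(_ isT isT).
rewrite -powRrM mulfV ?gt_eqF // powRr1 ?(ltW t0) // mulr1.
have -> : 1 `^ (1 - a)^-1 = 1 :> R by rewrite powR1.
have -> : a + (1 - a) = 1 by lra.
move=> /(_ erefl).
lra.
Qed.

Lemma contpsi (a s x : R) : 0 < x + s < 1 ->
  {for x, continuous (fun x => psi F a x s)}.
Proof.
move=> hxs; rewrite /psi.
apply: cvgD.
  apply: cvgM; first exact: cvg_id.
  apply: (@continuous_comp _ _ _ (fun x => x + s) (derive1 F)).
    by apply: cvgD; [exact: cvg_id | exact: cvg_cst].
  exact: F'cont.
apply: cvgM; first exact: cvg_cst.
apply: (@continuous_comp _ _ _ (fun x => x + s) F).
  by apply: cvgD; [exact: cvg_id | exact: cvg_cst].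
exact: Fcont.
Qed.


Variables (a s w : R).
Hypotheses (a0 : 0 < a) (a1 : a <= 1) (s0 : 0 <= s) (sw : s < w) (w0 : 0 < w)
  (w1 : w < 1) (Fw : F w = 0).

Local Ltac hy := have := a0; have := a1; have := s0; have := sw; have := w0;
  have := w1; move=> ? ? ? ? ? ?.

Lemma Fpos t : 0 < t -> t < w -> 0 < F t.
Proof. by move=> t0 tw; rewrite -Fw; apply: Fdec. Qed.

Lemma psi_dec (x1 x2 : R) : 0 < x1 -> x1 < x2 -> x2 + s < 1 ->
  psi F a x2 s < psi F a x1 s.
Proof.
hy; move=> x10 x12 x21; rewrite /psi.
have h1 : derive1 F (x2 + s) < derive1 F (x1 + s) by apply: F'dec; lra.
have h2 : derive1 F (x1 + s) < 0 by apply: (proj2 (d1 _ _)); apply/andP; split; lra.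
have h3 : F (x2 + s) < F (x1 + s) by apply: Fdec; lra.
have h4 : a * F (x2 + s) < a * F (x1 + s) by rewrite ltr_pM2l.
nra.
Qed.

Lemma psi_exists : exists2 y, 0 < y < w - s & psi F a y s = 0.
Proof.
hy; set c := (s + w) / 2.
have c0 : 0 < c by rewrite /c; lra.
have cw : c < w by rewrite /c; lra.
have sc : s < c by rewrite /c; lra.
have Fc : 0 < F c by apply: Fpos.
have dw : derive1 F w < 0 by apply: (proj2 (d1 _ _)); apply/andP; split.
set d := - derive1 F w.
have d0 : 0 < d by rewrite /d; lra.
set e := a * F c / (2 * d).
have ed : e * d = a * F c / 2 by rewrite /e; field; lra.
have e0 : 0 < e by rewrite /e divr_gt0 // ?mulr_gt0 //; lra.
set x0 := Num.min ((c - s) / 2) e.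
have x00 : 0 < x0 by rewrite /x0 lt_min e0 andbT; lra.
have x0c : x0 <= (c - s) / 2 by rewrite /x0 ge_min lexx.
have x0e : x0 <= e by rewrite /x0 ge_min lexx orbT.
have x0d : x0 * d <= e * d by rewrite ler_pM2r.
have p0 : 0 < psi F a x0 s.
  rewrite /psi.
  have h1 : derive1 F w < derive1 F (x0 + s) by apply: F'dec; lra.
  have h2 : F c < F (x0 + s) by apply: Fdec; lra.
  have h3 : a * F c < a * F (x0 + s) by rewrite ltr_pM2l.
  have h4 : x0 * derive1 F w < x0 * derive1 F (x0 + s) by rewrite ltr_pM2l.
  have h5 : 0 < a * F c by rewrite mulr_gt0.
  rewrite ed /d mulrN in x0d.
  lra.
have p1 : psi F a (w - s) s < 0.
  rewrite /psi subrK Fw mulr0 addr0 pmulr_rlt0 //; lra.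
have x0w : x0 <= w - s by lra.
have cont : {within `[x0, w - s], continuous (fun x => psi F a x s)}.
  apply: continuous_in_subspaceT => x; rewrite inE /= in_itv /= => /andP[hx1 hx2].
  by apply: contpsi; apply/andP; split; lra.
have hv : Num.min (psi F a x0 s) (psi F a (w - s) s) <= 0 <=
    Num.max (psi F a x0 s) (psi F a (w - s) s).
  by rewrite ge_min le_max (ltW p1) (ltW p0) orbT.
have [y] := IVT x0w cont hv.
rewrite in_itv /= => /andP[y1 y2] py.
exists y => //; apply/andP; split; first lra.
rewrite lt_neqAle y2 andbT; apply/negP => /eqP hy.
by move: p1; rewrite -hy py ltxx.
Qed.

Lemma gmax y z : 0 < y < w - s -> psi F a y s = 0 -> 0 < z < w - s ->
  z `^ a * F (z + s) <= y `^ a * F (y + s).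
Proof.
hy; move=> /andP[y0 yw] py /andP[z0 zw].
set B := F (y + s).
have B0 : 0 < B by apply: Fpos; lra.
set Fp := derive1 F (y + s).
have hp : y * Fp + a * B = 0 by [].
set t := z / y.
have t0 : 0 < t by rewrite divr_gt0.
have zt : z = t * y by rewrite /t divfK ?gt_eqF.
have tg : F (z + s) <= B + Fp * ((z + s) - (y + s)).
  by apply: tangent; apply/andP; split; lra.
have e1 : Fp * ((z + s) - (y + s)) = - a * B * (t - 1).
  have -> : (z + s) - (y + s) = (t - 1) * y by rewrite zt; ring.
  have hyF : y * Fp = - (a * B) by lra.
  transitivity ((y * Fp) * (t - 1)); first ring.
  rewrite hyF; ring.
rewrite e1 in tg.
rewrite zt powRM ?(ltW t0) ?(ltW y0) //.
have ya : 0 < y `^ a by apply: powR_gt0.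
rewrite mulrAC [y `^ a * B]mulrC ler_pM2r //.
set P := t `^ a.
have P0 : 0 <= P by apply: powR_ge0.
have Pb : P <= 1 + a * (t - 1) by apply: bern => //; apply/andP; split.
have h1 : P * F (t * y + s) <= P * (B * (1 - a * (t - 1))).
  by rewrite -zt; apply: ler_wpM2l => //; lra.
have [cn|cp] := lerP (1 - a * (t - 1)) 0.
  have : P * (B * (1 - a * (t - 1))) <= 0.
    by apply: mulr_ge0_le0 => //; apply: mulr_ge0_le0 => //; lra.
  lra.
have : P * (B * (1 - a * (t - 1))) <= (1 + a * (t - 1)) * (B * (1 - a * (t - 1))).
  by apply: ler_wpM2r => //; apply: mulr_ge0; lra.
have -> : (1 + a * (t - 1)) * (B * (1 - a * (t - 1))) = B - B * (a * (t - 1)) ^+ 2.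
  by ring.
have : 0 <= B * (a * (t - 1)) ^+ 2 by rewrite mulr_ge0 ?sqr_ge0 // ltW.
lra.
Qed.

End Gen.
Theorem lemma2 (R : realType) (n m : nat)
  (Rr p : 'I_m -> R -> R) (a k : 'I_n -> R) (omega : 'I_n -> 'I_m -> R)
  (HR : forall j t, 0 <= t -> 1 < Rr j t)
  (Hp01 : forall j t, 0 <= t -> 0 <= p j t <= 1)
  (Hp0 : forall j, p j 0 = 0)
  (Hp1 : forall j t, 1 <= t -> p j t = 1)
  (Ha : forall i, 0 < a i <= 1)
  (Hk : forall i, 0 < k i)
  (Hcont : forall i j,
     {within `[0, 1], continuous (Feff (Rr j) (p j) (a i) (k i))})
  (Hd1 : forall i j t, 0 < t < 1 ->
     derivable (Feff (Rr j) (p j) (a i) (k i)) t 1 /\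
     derive1 (Feff (Rr j) (p j) (a i) (k i)) t < 0)
  (Hd2 : forall i j t, 0 < t < 1 ->
     derivable (derive1 (Feff (Rr j) (p j) (a i) (k i))) t 1 /\
     derive1 (derive1 (Feff (Rr j) (p j) (a i) (k i))) t < 0)
  (Homega : forall i j, 0 < omega i j < 1 /\
     Feff (Rr j) (p j) (a i) (k i) (omega i j) = 0)
  (i : 'I_n) (x : 'I_n -> 'I_m -> R)
  (Hx : forall l, l != i -> inC (x l)) :
  let F := fun j => Feff (Rr j) (p j) (a i) (k i) in
  let s := fun j => xT x i j in
  let A := fun j => s j < omega i j in
  let inRA := fun y : 'I_m -> R =>
    forall j, A j -> 0 < y j < omega i j - s j in
  let solves := fun y : 'I_m -> R =>
    forall j, A j -> psi (F j) (a i) (y j) (s j) = 0 in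
  let V := fun y : 'I_m -> R =>
    \sum_(j < m | A j) (y j `^ a i) * F j (y j + s j) in
  exists y : 'I_m -> R,
    [/\ inRA y, solves y,
        (forall z, inRA z -> solves z -> forall j, A j -> z j = y j) &
        (forall z, inRA z -> V z <= V y)].

Proof.
move=> F s A inRA solves V.
have s0 : forall j, 0 <= s j.
  move=> j; rewrite /s /xT; apply: sumr_ge0 => l hl.
  by case/andP: ((proj1 (Hx l hl)) j).
have key : forall j, exists yj : R, A j ->
    [/\ 0 < yj < omega i j - s j, psi (F j) (a i) yj (s j) = 0 &
     forall z, 0 < z < omega i j - s j ->
       z `^ a i * F j (z + s j) <= yj `^ a i * F j (yj + s j)].
  move=> j; case hA: (s j < omega i j); last by exists 0; rewrite /A hA.
  have [/andP[w0 w1] Fw] := Homega i j.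
  have [a0 a1] := andP (Ha i).
  have d1 := Hd1 i j; have d2 := Hd2 i j.
  have [y hy py] := @psi_exists R (F j) d1 d2 (a i) (s j) (omega i j)
    a0 a1 (s0 j) hA w0 w1 Fw.
  exists y => _; split => // z hz.
  exact: (@gmax R (F j) d1 d2 (a i) (s j) (omega i j) a0 a1 (s0 j) hA w0 w1 Fw).
have [y Hy] := choice key.
exists y; split.
- by move=> j hj; case: (Hy j hj).
- by move=> j hj; case: (Hy j hj).
- move=> z hz sz j hj.
  have [/andP[y0 yw] py _] := Hy j hj.
  have /andP[z0 zw] := hz j hj.
  have pz := sz j hj.
  have [/andP[w0 w1] Fw] := Homega i j.
  have [a0 a1] := andP (Ha i).
  have d1 := Hd1 i j; have d2 := Hd2 i j.
  have hA : s j < omega i j := hj.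
  have sj := s0 j.
  have [zy|yz|//] := ltgtP (z j) (y j).
  + have := @psi_dec R (F j) d1 d2 (a i) (s j) (omega i j) a0 a1 (s0 j) hA w0 w1
      (z j) (y j) z0 zy ltac:(lra).
    by rewrite py pz ltxx.
  + have := @psi_dec R (F j) d1 d2 (a i) (s j) (omega i j) a0 a1 (s0 j) hA w0 w1
      (y j) (z j) y0 yz ltac:(lra).
    by rewrite py pz ltxx.
- move=> z hz; rewrite /V; apply: ler_sum => j hj.
  have [_ _ hm] := Hy j hj.
  exact: hm (hz j hj).
Qed.
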